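(* Let $n\ge 2$ and $d\ge 2$. For every biseparable state $\rho$ on $(\mathbb{C}^d)^{\otimes n}$, $$\mathcal{C}_{\frac{n}{2}+1}(\rho)=\sum_{\alpha\neq\emptyset,\ |\alpha|\ge \frac n2+1}\|\tau_\alpha(\rho)\|^2\le d^n-d.$$
   Context: Consider $n$ qudits with Hilbert space $(\mathbb{C}^d)^{\otimes n}$. Let $\lambda_0=\mathbb{1}_d$ and let $\lambda_1,\dots,\lambda_{d^2-1}$ be Hermitian traceless $d\times d$ matrices normalized so that $\mathrm{Tr}[\lambda_i\lambda_j]=d\,\delta_{ij}$. For a nonempty subset $\alpha\subseteq\{1,\dots,n\}$ and a state $\rho$ with reduced state $\rho_\alpha$, define $\|\tau_\alpha(\rho)\|^2=\sum_{(i_k)_{k\in\alpha}\in\{1,\dots,d^2-1\}^{\alpha}}\big(\mathrm{Tr}[\rho_\alpha\bigotimes_{k\in\alpha}\lambda_{i_k}]\big)^2$. For real $x$, $\mathcal{C}_x(\rho)=\sum_{\alpha\neq\emptyset,\ |\alpha|\ge x}\|\tau_\alpha(\rho)\|^2$. A state is biseparable if it is a convex combination of pure states each of which is a product $|\phi\rangle_\beta\otimes|\chi\rangle_{\overline{\beta}}$ for some bipartition $\{1,\dots,n\}=\beta\,\dot\cup\,\overline\beta$ into nonempty sets (the bipartition may differ between terms). *)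

(* Defs.v *)
From HB Require Import structures.
From mathcomp Require Import all_boot all_order all_algebra.
From mathcomp Require Import complex.
Set Implicit Arguments. Unset Strict Implicit. Unset Printing Implicit Defensive.
Import Order.TTheory GRing.Theory Num.Theory.
Local Open Scope ring_scope.

(* computational basis labels of (C^d)^{⊗n}: functions {1..n} -> {0..d-1} *)
Definition Idx (n d : nat) := {ffun 'I_n -> 'I_d}.
Definition Conf (n d : nat) (A : {set 'I_n}) := {ffun {k : 'I_n | k \in A} -> 'I_d}.

Lemma in_setC_of_false (n : nat) (A : {set 'I_n}) (k : 'I_n) :
  k \in A = false -> k \in ~: A.
Proof. by rewrite in_setC => ->. Qed.

Definition glue (n d : nat) (A : {set 'I_n}) (x : Conf d A) (z : Conf d (~: A))
  : Idx n d :=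
  [ffun k => (if k \in A as b return (k \in A = b -> 'I_d)
              then fun h => x (exist _ k h)
              else fun h => z (exist _ k (in_setC_of_false h))) (erefl _)].

Definition restr (n d : nat) (A : {set 'I_n}) (x : Idx n d) : Conf d A :=
  [ffun k => x (val k)].

(* operators on (C^d)^{⊗n} are given by their matrix entries <x|rho|y> *)
Definition op (R : rcfType) (n d : nat) := Idx n d -> Idx n d -> R[i].

Definition ptrace (R : rcfType) (n d : nat) (A : {set 'I_n}) (rho : op R n d)
  (x y : Conf d A) : R[i] :=
  \sum_(z : Conf d (~: A)) rho (glue x z) (glue y z).

Definition hermitian (R : rcfType) (d : nat) (M : 'M[R[i]]_d) : Prop :=
  map_mx (fun c => c^*) M^T = M.

Definition gellmann_basis (R : rcfType) (d : nat)
  (lam : 'I_(d ^ 2 - 1) -> 'M[R[i]]_d) : Prop :=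
  (forall i, hermitian (lam i)) /\
  (forall i, \tr (lam i) = 0) /\
  (forall i j, \tr (lam i *m lam j) = (d * (i == j))%:R).

(* ||tau_alpha(rho)||^2 =
   sum_{(i_k)_{k in alpha}} (Tr[rho_alpha (⊗_{k in alpha} lam_{i_k})])^2 *)
Definition tau2 (R : rcfType) (n d : nat) (lam : 'I_(d ^ 2 - 1) -> 'M[R[i]]_d)
  (A : {set 'I_n}) (rho : op R n d) : R[i] :=
  \sum_(ii : {ffun {k : 'I_n | k \in A} -> 'I_(d ^ 2 - 1)})
    (\sum_(x : Conf d A) \sum_(y : Conf d A)
        ptrace rho x y * \prod_(k : {k : 'I_n | k \in A}) lam (ii k) (y k) (x k))
    ^+ 2.

Definition Cx (R : rcfType) (n d : nat) (lam : 'I_(d ^ 2 - 1) -> 'M[R[i]]_d)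
  (x : R) (rho : op R n d) : R[i] :=
  \sum_(A : {set 'I_n} | (A != set0) && (x <= (#|A|%:R : R)))
    tau2 lam A rho.

Definition product_vec (R : rcfType) (n d : nat) (psi : Idx n d -> R[i]) : Prop :=
  exists B : {set 'I_n}, [/\ B != set0, ~: B != set0 &
    exists (f : Conf d B -> R[i]) (g : Conf d (~: B) -> R[i]),
      forall x, psi x = f (restr B x) * g (restr (~: B) x)].

Definition biseparable (R : rcfType) (n d : nat) (rho : op R n d) : Prop :=
  exists (m : nat) (p : 'I_m -> R[i]) (psi : 'I_m -> Idx n d -> R[i]),
    [/\ (forall j, 0 <= p j), \sum_j p j = 1,
        (forall j, \sum_x `|psi j x| ^+ 2 = 1),
        (forall j, product_vec (psi j)) &
        (forall x y, rho x y = \sum_j p j * psi j x * (psi j y)^*)].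

(* Main.v *)
Require Import Defs.
From HB Require Import structures.
From mathcomp Require Import all_boot all_order all_algebra.
From mathcomp Require Import complex.
From mathcomp Require Import ring lra zify.
Set Implicit Arguments. Unset Strict Implicit. Unset Printing Implicit Defensive.
Import Order.TTheory GRing.Theory Num.Theory.
Local Open Scope ring_scope.

Section Glue.
Variables (n d : nat) (A : {set 'I_n}).

Lemma glue_in (x : Conf d A) (z : Conf d (~: A)) (u : {k : 'I_n | k \in A}) :
  glue x z (val u) = x u.
Proof.
rewrite /glue ffunE; case: u => k h /=.
move: (erefl (k \in A)).
have H : forall b (e : (k \in A) = b), (if b as b0 return ((k \in A) = b0 -> 'I_d)
  then fun h0 => x (exist _ k h0) else fun h0 => z (exist _ k (in_setC_of_false h0))) e
  = x (exist _ k h).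
  move=> b; case: b => e; first by congr (x _); apply: val_inj.
  by exfalso; move: h; rewrite e.
by apply: H.
Qed.

Lemma glue_out (x : Conf d A) (z : Conf d (~: A)) (u : {k : 'I_n | k \in ~: A}) :
  glue x z (val u) = z u.
Proof.
rewrite /glue ffunE; case: u => k h /=.
move: (erefl (k \in A)).
have H : forall b (e : (k \in A) = b), (if b as b0 return ((k \in A) = b0 -> 'I_d)
  then fun h0 => x (exist _ k h0) else fun h0 => z (exist _ k (in_setC_of_false h0))) e
  = z (exist _ k h).
  move=> b; case: b => e; last by congr (z _); apply: val_inj.
  by exfalso; move: h; rewrite in_setC e.
by apply: H.
Qed.

Lemma restr_glue1 (x : Conf d A) (z : Conf d (~: A)) : restr A (glue x z) = x.
Proof. by apply/ffunP => u; rewrite ffunE glue_in. Qed.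
Lemma restr_glue2 (x : Conf d A) (z : Conf d (~: A)) : restr (~: A) (glue x z) = z.
Proof. by apply/ffunP => u; rewrite ffunE glue_out. Qed.
Lemma glue_restr (X : Idx n d) : glue (restr A X) (restr (~: A) X) = X.
Proof.
apply/ffunP => k; case: (boolP (k \in A)) => h.
  by rewrite -[k]/(val (exist (fun k => k \in A) k h)) glue_in ffunE.
have h' : k \in ~: A by rewrite in_setC h.
by rewrite -[k]/(val (exist (fun k => k \in ~: A) k h')) glue_out ffunE.
Qed.

Lemma sum_glue (V : zmodType) (F : Idx n d -> V) :
  \sum_X F X = \sum_(x : Conf d A) \sum_(z : Conf d (~: A)) F (glue x z).
Proof.
rewrite pair_bigA /=.
rewrite (reindex (fun p : Conf d A * Conf d (~: A) => glue p.1 p.2)) //=.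
exists (fun X => (restr A X, restr (~: A) X)) => [[x z] _|X _] /=.
  by rewrite restr_glue1 restr_glue2.
by rewrite glue_restr.
Qed.

End Glue.

Lemma sq_inv (F : fieldType) m N (e : m = N) (U : 'M[F]_(m,N)) (W : 'M_(N,m)) :
  U *m W = 1%:M -> W *m U = 1%:M.
Proof. by subst; apply: mulmx1C. Qed.

Lemma sum_mxvec (V : zmodType) d (F : 'I_(d * d) -> V) :
  \sum_k F k = \sum_(a < d) \sum_(b < d) F (mxvec_index a b).
Proof.
rewrite pair_bigA /=.
rewrite (reindex (fun p : 'I_d * 'I_d => mxvec_index p.1 p.2)) //=.
exists (fun k => enum_val (cast_ord (esym (mxvec_cast d d)) k)) => [[a b] _|k _] /=.
  by rewrite /mxvec_index cast_ordK enum_rankK.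
by rewrite /mxvec_index -[(enum_val _).1]/(fst (enum_val _)) -surjective_pairing enum_valK cast_ordKV.
Qed.

Section Compl.
Variables (R : rcfType) (d : nat) (lam : 'I_(d ^ 2 - 1) -> 'M[R[i]]_d).
Hypothesis hlam : gellmann_basis lam.
Hypothesis hd : (0 < d)%N.

Definition Lam (mu : 'I_(1 + (d ^ 2 - 1))) : 'M[R[i]]_d :=
  match split mu with inl _ => 1%:M | inr j => lam j end.

Lemma Lam_herm mu a b : (Lam mu a b)^* = Lam mu b a.
Proof.
rewrite /Lam; case: (split mu) => [_|j].
  by rewrite !mxE eq_sym; case: (_ == _); rewrite ?conjC1 ?conjC0.
case: hlam => H _; move: (H j) => /matrixP /(_ b a).
by rewrite !mxE.
Qed.

Lemma Lam_tr mu nu : \tr (Lam mu *m Lam nu) = (d * (mu == nu))%:R.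
Proof.
case: hlam => _ [H0 H1].
rewrite /Lam; case: (splitP mu) => [i ei|j ej]; case: (splitP nu) => [i' ei'|j' ej'].
- have -> : mu == nu by apply/eqP/val_inj; rewrite /= ei ei'; case: i {ei}; case: i' {ei'} => [[]] // ? [] //.
  by rewrite mulmx1 mxtrace1 muln1.
- have -> : (mu == nu) = false.
    apply/negbTE/eqP => e; move: ej'; rewrite -e ei; case: i {ei} => [[]] //.
  by rewrite mul1mx H0 muln0.
- have -> : (mu == nu) = false.
    apply/negbTE/eqP => e; move: ej; rewrite e ei'; case: i' {ei'} => [[]] //.
  by rewrite mulmx1 H0 muln0.
- rewrite H1; congr ((d * _)%:R); congr (nat_of_bool _); apply/idP/idP => /eqP e; apply/eqP.
    by apply/val_inj; rewrite /= ej ej' e.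
  by apply/val_inj/eqP; rewrite -(eqn_add2l 1) -ej -ej' e.
Qed.


Lemma mxvec_index_eq a b c e :
  (mxvec_index a b == mxvec_index c e :> 'I_(d * d)) = (a == c) && (b == e).
Proof.
by rewrite /mxvec_index (inj_eq (@cast_ord_inj _ _ _)) (inj_eq (@enum_rank_inj _)) xpair_eqE.
Qed.

Lemma Lam_compl a b c e :
  \sum_mu (Lam mu b a) * Lam mu c e = (d * ((a == c) && (b == e)))%:R.
Proof.
pose U : 'M[R[i]]_(1 + (d ^ 2 - 1), d * d) := \matrix_(mu, k) mxvec (Lam mu) 0 k.
pose W : 'M[R[i]]_(d * d, 1 + (d ^ 2 - 1)) := \matrix_(k, mu) (d%:R^-1 * (U mu k)^*).
have dn0 : (d%:R : R[i]) != 0 by rewrite pnatr_eq0 -lt0n.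
have UW : U *m W = 1%:M.
  apply/matrixP => mu nu; rewrite !mxE sum_mxvec.
  transitivity (d%:R^-1 * \tr (Lam mu *m Lam nu)).
    rewrite /mxtrace mulr_sumr; apply: eq_bigr => a' _.
    rewrite mxE mulr_sumr; apply: eq_bigr => b' _.
    by rewrite !mxE !mxvecE Lam_herm mulrCA.
  rewrite Lam_tr natrM; case: (mu == nu); rewrite ?mulr1 ?mulr0 //.
  by rewrite mulVf.
have ee : (1 + (d ^ 2 - 1) = d * d)%N.
  by rewrite subnKC ?expn_gt0 ?hd // -mulnn.
move: (sq_inv ee UW) => /matrixP /(_ (mxvec_index a b) (mxvec_index c e)).
rewrite !mxE mxvec_index_eq => H.
have := congr1 (fun x => d%:R * x) H.
rewrite mulr_sumr natrM => <-; apply: eq_bigr => mu _.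
by rewrite !mxE !mxvecE Lam_herm mulrA mulrA mulfV // mul1r.
Qed.

Lemma lam_compl a b c e :
  \sum_j (lam j b a) * lam j c e =
    (d * ((a == c) && (b == e)))%:R - ((a == b) && (c == e))%:R.
Proof.
rewrite -Lam_compl big_split_ord /= big_ord1.
have -> : Lam (lshift (d ^ 2 - 1) ord0) = 1%:M.
  by rewrite /Lam (unsplitK (inl _ : 'I_1 + 'I_(d ^ 2 - 1))).
have -> : ((1%:M : 'M[R[i]]_d) b a * (1%:M : 'M[R[i]]_d) c e) = ((a == b) && (c == e))%:R.
  by rewrite !mxE (eq_sym b a); case: (a == b); case: (c == e); rewrite ?mulr1 ?mulr0.
rewrite addrC addrK; apply: eq_bigr => j _.
by rewrite /Lam (unsplitK (inr _ : 'I_1 + 'I_(d ^ 2 - 1))).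
Qed.

End Compl.

Section Exp.
Variables (R : rcfType) (n d : nat) (lam : 'I_(d ^ 2 - 1) -> 'M[R[i]]_d).
Hypothesis hlam : gellmann_basis lam.
Hypothesis hd : (0 < d)%N.

Definition G (b : bool) (x y x' y' : 'I_d) : R[i] :=
  if b then (d * ((x == y') && (y == x')))%:R - ((x == y) && (y' == x'))%:R
  else ((x == y) && (y' == x'))%:R.

Lemma exch4 (V : zmodType) (I A B C D : finType) (F : I -> A -> B -> C -> D -> V) :
  \sum_i \sum_a \sum_b \sum_c \sum_e F i a b c e =
  \sum_a \sum_b \sum_c \sum_e \sum_i F i a b c e.
Proof.
rewrite exchange_big; apply: eq_bigr => a _.
rewrite exchange_big; apply: eq_bigr => b _.
rewrite exchange_big; apply: eq_bigr => c _.
by rewrite exchange_big.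
Qed.

Lemma tau2E (A : {set 'I_n}) (rho : op R n d) :
  tau2 lam A rho = \sum_(x : Conf d A) \sum_(y : Conf d A) \sum_(x' : Conf d A)
    \sum_(y' : Conf d A) ptrace rho x y * ptrace rho x' y' *
      \prod_u G true (x u) (y u) (x' u) (y' u).
Proof.
rewrite /tau2.
transitivity (\sum_(ii : {ffun {k : 'I_n | k \in A} -> 'I_(d ^ 2 - 1)})
   \sum_(x : Conf d A) \sum_(y : Conf d A) \sum_(x' : Conf d A) \sum_(y' : Conf d A)
   (ptrace rho x y * \prod_u lam (ii u) (y u) (x u)) *
   (ptrace rho x' y' * \prod_u lam (ii u) (y' u) (x' u))).
  apply: eq_bigr => ii _; rewrite expr2 mulr_suml; apply: eq_bigr => x _.
  rewrite mulr_suml; apply: eq_bigr => y _.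
  rewrite mulr_sumr; apply: eq_bigr => x' _.
  by rewrite mulr_sumr.
rewrite exch4; apply: eq_bigr => x _; apply: eq_bigr => y _.
apply: eq_bigr => x' _; apply: eq_bigr => y' _.
transitivity (ptrace rho x y * ptrace rho x' y' * \sum_(ii : {ffun {k : 'I_n | k \in A} -> 'I_(d ^ 2 - 1)})
   \prod_u (lam (ii u) (y u) (x u) * lam (ii u) (y' u) (x' u))).
  rewrite mulr_sumr; apply: eq_bigr => ii _.
  by rewrite big_split /= mulrACA.
congr (_ * _); rewrite -(bigA_distr_bigA (fun u j => lam j (y u) (x u) * lam j (y' u) (x' u))) /=; apply: eq_bigr => u _.
by rewrite lam_compl.
Qed.

End Exp.

Lemma prod_ind (C : comNzRingType) (I : finType) (P : pred I) :
  \prod_(u : I) ((P u)%:R : C) = ([forall u, P u])%:R.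
Proof.
case: forallP => H; first by rewrite big1 // => u _; rewrite H.
have [u Hu] : exists u, ~~ P u.
  by apply/existsP; rewrite -negb_forall; apply/forallP.
by rewrite (bigD1 u) //= (negbTE Hu) mul0r.
Qed.

Lemma sum_ind (V : zmodType) (C : comNzRingType) (I : finType) (z : I) (F : I -> C) :
  \sum_w (F w * (z == w)%:R) = F z.
Proof.
rewrite (bigD1 z) //= eqxx mulr1 big1 ?addr0 // => w.
by rewrite eq_sym => /negbTE ->; rewrite mulr0.
Qed.

Section TT.
Variables (R : rcfType) (n d : nat).
Local Notation C := (R[i]).

Lemma prod_split (A : {set 'I_n}) (H : 'I_n -> C) :
  \prod_k H k = \prod_(u : {k : 'I_n | k \in A}) H (val u) *
                \prod_(u : {k : 'I_n | k \in ~: A}) H (val u).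
Proof.
rewrite (bigID (fun k => k \in A)) /=; congr (_ * _).
  by rewrite -big_sub.
rewrite -big_sub; apply: eq_bigl => k; by rewrite in_setC.
Qed.

Lemma L2 (A : {set 'I_n}) (F : Idx n d -> Idx n d -> C) :
  \sum_X \sum_Y (F X Y * (restr (~: A) X == restr (~: A) Y)%:R) =
  \sum_(x : Conf d A) \sum_(y : Conf d A) \sum_(z : Conf d (~: A))
      F (glue x z) (glue y z).
Proof.
rewrite (sum_glue A); apply: eq_bigr => x _.
under eq_bigr do rewrite (sum_glue A).
rewrite exchange_big; apply: eq_bigr => y _.
apply: eq_bigr => z _.
under eq_bigr do rewrite !restr_glue2.
exact: (sum_ind C).
Qed.

End TT.

Section TT2.
Variables (R : rcfType) (n d : nat) (lam : 'I_(d ^ 2 - 1) -> 'M[R[i]]_d).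
Hypothesis hlam : gellmann_basis lam.
Hypothesis hd : (0 < d)%N.
Local Notation C := (R[i]).

Definition TA (A : {set 'I_n}) (rho : op R n d) : C :=
  \sum_(X : Idx n d) \sum_(Y : Idx n d) \sum_(X' : Idx n d) \sum_(Y' : Idx n d)
    rho X Y * rho X' Y' * \prod_k @G R d (k \in A) (X k) (Y k) (X' k) (Y' k).

Lemma prodG (A : {set 'I_n}) (X Y X' Y' : Idx n d) :
  \prod_k @G R d (k \in A) (X k) (Y k) (X' k) (Y' k) =
  \prod_u @G R d true (restr A X u) (restr A Y u) (restr A X' u) (restr A Y' u) *
  ((restr (~: A) X == restr (~: A) Y)%:R * (restr (~: A) X' == restr (~: A) Y')%:R).
Proof.
rewrite (prod_split A); congr (_ * _).
  apply: eq_bigr => u _; rewrite !ffunE; by case: u => k /= ->.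
transitivity (\prod_(u : {k : 'I_n | k \in ~: A})
   (((restr (~: A) X u == restr (~: A) Y u) && (restr (~: A) X' u == restr (~: A) Y' u))%:R : C)).
  apply: eq_bigr; case=> k hk; rewrite !ffunE /G /=.
  move: hk; rewrite in_setC => /negbTE ->; by rewrite (eq_sym (Y' k)).
rewrite prod_ind -natrM mulnb; congr ((nat_of_bool _)%:R).
apply/forallP/andP => [H|[/eqP -> /eqP ->] u]; last by rewrite !eqxx.
by split; apply/eqP/ffunP => u; case/andP: (H u) => /eqP e1 /eqP e2.
Qed.

Lemma tauT (A : {set 'I_n}) (rho : op R n d) : tau2 lam A rho = TA A rho.
Proof.
rewrite (tau2E hlam) // /TA.
transitivity (\sum_X \sum_Y (rho X Y * (\sum_(x' : Conf d A) \sum_(y' : Conf d A)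
   \sum_(z' : Conf d (~: A)) rho (glue x' z') (glue y' z') *
     \prod_u @G R d true (restr A X u) (restr A Y u) (x' u) (y' u))
   * (restr (~: A) X == restr (~: A) Y)%:R)).
  rewrite L2; apply: eq_bigr => x _; apply: eq_bigr => y _.
  rewrite /ptrace.
  under eq_bigr do under eq_bigr do rewrite -mulrA.
  under eq_bigr do rewrite -mulr_sumr.
  rewrite -mulr_sumr mulr_suml; apply: eq_bigr => z _; congr (_ * _).
  apply: eq_bigr => x' _; apply: eq_bigr => y' _.
  rewrite mulr_suml; apply: eq_bigr => z' _.
  by rewrite !restr_glue1.
apply: eq_bigr => X _; apply: eq_bigr => Y _.
transitivity (rho X Y * (restr (~: A) X == restr (~: A) Y)%:R *
  \sum_X' \sum_Y' ((rho X' Y' * \prod_u @G R d true (restr A X u) (restr A Y u) (restr A X' u) (restr A Y' u))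
     * (restr (~: A) X' == restr (~: A) Y')%:R)).
  rewrite L2 mulrAC; congr (_ * _).
  apply: eq_bigr => x' _; apply: eq_bigr => y' _.
  by apply: eq_bigr => z' _; rewrite !restr_glue1.
rewrite mulr_sumr; apply: eq_bigr => X' _.
rewrite mulr_sumr; apply: eq_bigr => Y' _.
rewrite prodG.
set a := rho X Y; set b := rho X' Y'; set P := \prod_u _.
set e1 := (_ == _)%:R; set e2 := (_ == _)%:R.
by rewrite -!mulrA; congr (_ * _); rewrite mulrCA; congr (_ * _); rewrite mulrCA.
Qed.

End TT2.

Section TT3.
Variables (R : rcfType) (n d : nat).
Local Notation C := (R[i]).

Lemma TQ (A : {set 'I_n}) (rho : op R n d) (Q : Conf d A -> Conf d A -> Conf d A -> Conf d A -> C) :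
  \sum_(X : Idx n d) \sum_(Y : Idx n d) \sum_(X' : Idx n d) \sum_(Y' : Idx n d)
    rho X Y * rho X' Y' * (Q (restr A X) (restr A Y) (restr A X') (restr A Y') *
     ((restr (~: A) X == restr (~: A) Y)%:R * (restr (~: A) X' == restr (~: A) Y')%:R))
  = \sum_(x : Conf d A) \sum_(y : Conf d A) \sum_(x' : Conf d A)
    \sum_(y' : Conf d A) ptrace rho x y * ptrace rho x' y' * Q x y x' y'.
Proof.
symmetry.
transitivity (\sum_X \sum_Y (rho X Y * (\sum_(x' : Conf d A) \sum_(y' : Conf d A)
   \sum_(z' : Conf d (~: A)) rho (glue x' z') (glue y' z') *
     Q (restr A X) (restr A Y) x' y')
   * (restr (~: A) X == restr (~: A) Y)%:R)).
  rewrite L2; apply: eq_bigr => x _; apply: eq_bigr => y _.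
  rewrite /ptrace.
  under eq_bigr do under eq_bigr do rewrite -mulrA.
  under eq_bigr do rewrite -mulr_sumr.
  rewrite -mulr_sumr mulr_suml; apply: eq_bigr => z _; congr (_ * _).
  apply: eq_bigr => x' _; apply: eq_bigr => y' _.
  rewrite mulr_suml; apply: eq_bigr => z' _.
  by rewrite !restr_glue1.
apply: eq_bigr => X _; apply: eq_bigr => Y _.
transitivity (rho X Y * (restr (~: A) X == restr (~: A) Y)%:R *
  \sum_X' \sum_Y' ((rho X' Y' * Q (restr A X) (restr A Y) (restr A X') (restr A Y'))
     * (restr (~: A) X' == restr (~: A) Y')%:R)).
  rewrite L2 mulrAC; congr (_ * _).
  apply: eq_bigr => x' _; apply: eq_bigr => y' _.
  by apply: eq_bigr => z' _; rewrite !restr_glue1.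
rewrite mulr_sumr; apply: eq_bigr => X' _.
rewrite mulr_sumr; apply: eq_bigr => Y' _.
set a := rho X Y; set b := rho X' Y'; set P := Q _ _ _ _.
set e1 := (_ == _)%:R; set e2 := (_ == _)%:R.
by rewrite -!mulrA; congr (_ * _); rewrite mulrCA; congr (_ * _); rewrite mulrCA.
Qed.

Lemma sum_sets (H : 'I_n -> bool -> C) :
  \sum_(A : {set 'I_n}) \prod_k H k (k \in A) = \prod_k (H k false + H k true).
Proof.
under [RHS]eq_bigr do rewrite addrC -big_bool.
rewrite (bigA_distr_bigA H) /=.
rewrite (reindex (fun A : {set 'I_n} => [ffun k => k \in A])) /=; last first.
  exists (fun f : {ffun 'I_n -> bool} => [set k | f k]) => [A _|f _].
    by apply/setP => k; rewrite inE ffunE.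
  by apply/ffunP => k; rewrite !ffunE inE.
by apply: eq_bigr => A _; apply: eq_bigr => k _; rewrite ffunE.
Qed.

End TT3.

Section TT4.
Variables (R : rcfType) (n d : nat).
Local Notation C := (R[i]).
Local Notation GG := (@G R d).

Lemma GFT x y x' y' : GG false x y x' y' + GG true x y x' y' = (d * ((x == y') && (y == x')))%:R.
Proof. by rewrite /G addrC subrK. Qed.

Lemma sumTA_sub (S : {set 'I_n}) (rho : op R n d) :
  \sum_(A : {set 'I_n} | A \subset S) TA A rho =
  \sum_(X : Idx n d) \sum_(Y : Idx n d) \sum_(X' : Idx n d) \sum_(Y' : Idx n d)
    rho X Y * rho X' Y' * \prod_k (GG false (X k) (Y k) (X' k) (Y' k) +
       (k \in S)%:R * GG true (X k) (Y k) (X' k) (Y' k)).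
Proof.
rewrite big_mkcond /=.
transitivity (\sum_(A : {set 'I_n}) \sum_(X : Idx n d) \sum_(Y : Idx n d) \sum_(X' : Idx n d) \sum_(Y' : Idx n d)
    rho X Y * rho X' Y' * \prod_k (if k \in A then (k \in S)%:R * GG true (X k) (Y k) (X' k) (Y' k)
       else GG false (X k) (Y k) (X' k) (Y' k))).
  apply: eq_bigr => A _; case: (boolP (A \subset S)) => hA.
    rewrite /TA; do 4 (apply: eq_bigr => ? _); congr (_ * _); apply: eq_bigr => k _.
    by case: (boolP (k \in A)) => hk //; rewrite (subsetP hA _ hk) mul1r.
  symmetry; do 4 (apply: big1 => ? _).
  have [k /andP [hk hkS]] : exists k, (k \in A) && (k \notin S).
    apply/existsP; move: hA; apply: contraR; rewrite negb_exists => /forallP H.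
    apply/subsetP => k hk; move: (H k); by rewrite hk /= negbK.
  by rewrite (bigD1 k) //= hk (negbTE hkS) !mul0r mulr0.
rewrite exch4; do 4 (apply: eq_bigr => ? _).
rewrite -mulr_sumr; congr (_ * _).
rewrite (sum_sets (fun k b => if b then (k \in S)%:R * GG true _ _ _ _ else GG false _ _ _ _)) /=.
by apply: eq_bigr => k _; rewrite addrC.
Qed.

End TT4.

Section TT5.
Variables (R : rcfType) (n d : nat).
Local Notation C := (R[i]).
Local Notation GG := (@G R d).

Lemma prod_eq2 (I : finType) (f g f' g' : {ffun I -> 'I_d}) :
  \prod_u (((f u == g u) && (f' u == g' u))%:R : C) = ((f == g) && (f' == g'))%:R.
Proof.
rewrite prod_ind; congr ((nat_of_bool _)%:R).
apply/forallP/andP => [H|[/eqP -> /eqP ->] u]; last by rewrite !eqxx.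
by split; apply/eqP/ffunP => u; case/andP: (H u) => /eqP e1 /eqP e2.
Qed.

Lemma prod_dind (I : finType) (b : I -> bool) :
  \prod_u ((d * b u)%:R : C) = (d%:R ^+ #|I|) * \prod_u ((b u)%:R).
Proof. by rewrite -prodr_const -big_split /=; apply: eq_bigr => u _; rewrite natrM. Qed.

Lemma collapse2 (T : finType) (F : T -> T -> C) (X Y : T) :
  \sum_X' \sum_Y' (F X' Y' * ((X == Y') && (Y == X'))%:R) = F Y X.
Proof.
under eq_bigr do under eq_bigr do rewrite -mulnb natrM mulrA.
under eq_bigr do rewrite -mulr_suml (sum_ind C).
by rewrite (sum_ind C).
Qed.

Lemma sumTA_all (rho : op R n d) :
  \sum_(A : {set 'I_n}) TA A rho =
  d%:R ^+ n * \sum_(X : Idx n d) \sum_(Y : Idx n d) rho X Y * rho Y X.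
Proof.
have -> : \sum_(A : {set 'I_n}) TA A rho = \sum_(A : {set 'I_n} | A \subset setT) TA A rho.
  by apply: eq_bigl => A; rewrite subsetT.
rewrite sumTA_sub mulr_sumr; apply: eq_bigr => X _.
rewrite mulr_sumr; apply: eq_bigr => Y _.
rewrite -(collapse2 (fun X' Y' => d%:R ^+ n * (rho X Y * rho X' Y')) X Y).
apply: eq_bigr => X' _; apply: eq_bigr => Y' _.
under eq_bigr do rewrite inE mul1r GFT.
rewrite prod_dind card_ord.
rewrite (prod_eq2 (X : {ffun _ -> _}) Y' Y X').
by rewrite mulrCA mulrA.
Qed.

Lemma sumTA_subE (S : {set 'I_n}) (rho : op R n d) :
  \sum_(A : {set 'I_n} | A \subset S) TA A rho =
  d%:R ^+ #|S| * \sum_(x : Conf d S) \sum_(y : Conf d S) ptrace rho x y * ptrace rho y x.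
Proof.
transitivity (\sum_(x : Conf d S) \sum_(y : Conf d S) \sum_(x' : Conf d S)
    \sum_(y' : Conf d S) ptrace rho x y * ptrace rho x' y' *
     (d%:R ^+ #|S| * ((x == y') && (y == x'))%:R)); last first.
  rewrite mulr_sumr; apply: eq_bigr => x _; rewrite mulr_sumr; apply: eq_bigr => y _.
  rewrite -(collapse2 (fun x' y' => d%:R ^+ #|S| * (ptrace rho x y * ptrace rho x' y')) x y).
  apply: eq_bigr => x' _; apply: eq_bigr => y' _.
  by rewrite mulrA (mulrC (ptrace rho x y * _)).   
rewrite sumTA_sub.
rewrite -(@TQ R n d S rho (fun x y x' y' => d%:R ^+ #|S| * ((x == y') && (y == x'))%:R)).
apply: eq_bigr => X _; apply: eq_bigr => Y _; apply: eq_bigr => X' _; apply: eq_bigr => Y' _.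
congr (_ * _).
rewrite (prod_split S); congr (_ * _).
  transitivity (\prod_(u : {k : 'I_n | k \in S})
     ((d * ((restr S X u == restr S Y' u) && (restr S Y u == restr S X' u)))%:R : C)).
    by apply: eq_bigr; case => k hk; rewrite !ffunE /= hk mul1r GFT.
  by rewrite prod_dind prod_eq2 card_sig.
transitivity (\prod_(u : {k : 'I_n | k \in ~: S})
     ((((restr (~: S) X u == restr (~: S) Y u) && (restr (~: S) Y' u == restr (~: S) X' u)))%:R : C)).
  apply: eq_bigr; case => k hk; rewrite !ffunE /=.
  by move: hk; rewrite in_setC => /negbTE ->; rewrite mul0r addr0.
by rewrite prod_eq2 -natrM mulnb (eq_sym (restr _ Y')).
Qed.

End TT5.

Lemma jensen (R : rcfType) (I : finType) (p a : I -> R[i]) :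
  (forall j, 0 <= p j) -> \sum_j p j = 1 -> (forall j, a j \is Num.real) ->
  (\sum_j p j * a j) ^+ 2 <= \sum_j p j * a j ^+ 2.
Proof.
move=> hp hs ha; set m := \sum_j p j * a j.
have mr : m \is Num.real by apply: rpred_sum => j _; apply: rpredM; [apply: ger0_real | ].
have H : 0 <= \sum_j p j * (a j - m) ^+ 2.
  apply: sumr_ge0 => j _; apply: mulr_ge0 => //.
  by apply: real_exprn_even_ge0 => //; apply: rpredB.
have E : \sum_j p j * (a j - m) ^+ 2 =
   \sum_j p j * a j ^+ 2 - 2 * m * m + m ^+ 2 * \sum_j p j.
  transitivity (\sum_j (p j * a j ^+ 2 - 2 * m * (p j * a j) + m ^+ 2 * p j)).
    by apply: eq_bigr => j _; ring.
  by rewrite big_split sumrB /= -!mulr_sumr.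
move: H; rewrite E hs mulr1.
have -> : \sum_j p j * a j ^+ 2 - 2 * m * m + m ^+ 2 = \sum_j p j * a j ^+ 2 - m ^+ 2 by ring.
by rewrite subr_ge0.
Qed.

Section Real.
Variables (R : rcfType) (n d : nat) (lam : 'I_(d ^ 2 - 1) -> 'M[R[i]]_d).
Hypothesis hlam : gellmann_basis lam.
Local Notation C := (R[i]).

Definition Lf (A : {set 'I_n}) (rho : op R n d) (ii : {ffun {k : 'I_n | k \in A} -> 'I_(d ^ 2 - 1)}) : C :=
  \sum_(x : Conf d A) \sum_(y : Conf d A)
        ptrace rho x y * \prod_(k : {k : 'I_n | k \in A}) lam (ii k) (y k) (x k).

Lemma tau2_Lf (A : {set 'I_n}) (rho : op R n d) : tau2 lam A rho = \sum_(ii : {ffun {k : 'I_n | k \in A} -> 'I_(d ^ 2 - 1)}) Lf rho ii ^+ 2.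
Proof. by []. Qed.

Lemma lam_herm (j : 'I_(d ^ 2 - 1)) (a b : 'I_d) : (lam j a b)^* = lam j b a.
Proof. by case: hlam => H _; move: (H j) => /matrixP /(_ b a); rewrite !mxE. Qed.

Lemma Lf_real (A : {set 'I_n}) (rho : op R n d) (ii : {ffun {k : 'I_n | k \in A} -> 'I_(d ^ 2 - 1)}) : (forall X Y, (rho X Y)^* = rho Y X) ->
  Lf rho ii \is Num.real.
Proof.
move=> hr; rewrite CrealE; apply/eqP.
rewrite /Lf rmorph_sum exchange_big /=; apply: eq_bigr => y _.
rewrite rmorph_sum; apply: eq_bigr => x _.
rewrite rmorphM rmorph_prod /=; congr (_ * _).
  by rewrite /ptrace rmorph_sum; apply: eq_bigr => z _; apply: hr.
by apply: eq_bigr => k _; apply: lam_herm.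
Qed.

Lemma tau2_ge0 (A : {set 'I_n}) (rho : op R n d) : (forall X Y, (rho X Y)^* = rho Y X) ->
  0 <= tau2 lam A rho.
Proof.
move=> hr; apply: sumr_ge0 => ii _; apply: real_exprn_even_ge0 => //.
exact: Lf_real.
Qed.

Lemma Lf_mix (A : {set 'I_n}) m (p : 'I_m -> C) (rhos : 'I_m -> op R n d) (rho : op R n d) (ii : {ffun {k : 'I_n | k \in A} -> 'I_(d ^ 2 - 1)}) :
  (forall X Y, rho X Y = \sum_j p j * rhos j X Y) ->
  Lf rho ii = \sum_j p j * Lf (rhos j) ii.
Proof.
move=> hr; rewrite /Lf.
under [RHS]eq_bigr do rewrite mulr_sumr.
rewrite [RHS]exchange_big; apply: eq_bigr => x _.
under [RHS]eq_bigr do rewrite mulr_sumr.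
rewrite [RHS]exchange_big; apply: eq_bigr => y _.
rewrite /ptrace mulr_suml.
under [RHS]eq_bigr do rewrite mulr_suml mulr_sumr.
rewrite [RHS]exchange_big; apply: eq_bigr => z _.
by rewrite hr mulr_suml; apply: eq_bigr => j _; rewrite mulrA.
Qed.

Lemma tau2_mix (A : {set 'I_n}) m (p : 'I_m -> C) (rhos : 'I_m -> op R n d) (rho : op R n d) :
  (forall j, 0 <= p j) -> \sum_j p j = 1 ->
  (forall j X Y, (rhos j X Y)^* = rhos j Y X) ->
  (forall X Y, rho X Y = \sum_j p j * rhos j X Y) ->
  tau2 lam A rho <= \sum_j p j * tau2 lam A (rhos j).
Proof.
move=> hp hs hh hr.
under eq_bigr do rewrite tau2_Lf mulr_sumr.
rewrite tau2_Lf exchange_big; apply: ler_sum => ii _.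
rewrite (Lf_mix _ hr); apply: jensen => // j.
exact: Lf_real.
Qed.

End Real.

Section Pure.
Variables (R : rcfType) (n d : nat).
Local Notation C := (R[i]).

Definition rpure (psi : Idx n d -> C) : op R n d := fun X Y => psi X * (psi Y)^*.

Lemma rpure_herm psi X Y : (rpure psi X Y)^* = rpure psi Y X.
Proof. by rewrite /rpure rmorphM /= conjCK mulrC. Qed.

Lemma sum_sq (I : finType) (a : I -> C) : \sum_i \sum_j a i * a j = (\sum_i a i) ^+ 2.
Proof.
by rewrite expr2 mulr_suml; apply: eq_bigr => i _; rewrite mulr_sumr.
Qed.

Lemma purity_all psi :
  \sum_(X : Idx n d) \sum_(Y : Idx n d) rpure psi X Y * rpure psi Y X =
  (\sum_X `|psi X| ^+ 2) ^+ 2.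
Proof.
rewrite -sum_sq; apply: eq_bigr => X _; apply: eq_bigr => Y _.
by rewrite /rpure !normCK; ring.
Qed.

Lemma purity_sub psi (S : {set 'I_n}) (f : Conf d S -> C) (g : Conf d (~: S) -> C) :
  (forall X, psi X = f (restr S X) * g (restr (~: S) X)) ->
  \sum_(x : Conf d S) \sum_(y : Conf d S) ptrace (rpure psi) x y * ptrace (rpure psi) y x =
  (\sum_X `|psi X| ^+ 2) ^+ 2.
Proof.
move=> hp.
set Ng := \sum_(z : Conf d (~: S)) g z * (g z)^*.
have P : forall x y, ptrace (rpure psi) x y = f x * (f y)^* * Ng.
  move=> x y; rewrite /ptrace /Ng mulr_sumr; apply: eq_bigr => z _.
  rewrite /rpure !hp !restr_glue1 !restr_glue2 rmorphM /=; ring.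
have -> : \sum_X `|psi X| ^+ 2 = (\sum_(x : Conf d S) f x * (f x)^*) * Ng.
  rewrite (sum_glue S) mulr_suml; apply: eq_bigr => x _.
  rewrite /Ng mulr_sumr; apply: eq_bigr => z _.
  rewrite normCK hp restr_glue1 restr_glue2 rmorphM /=; ring.
rewrite exprMn -sum_sq mulr_suml; apply: eq_bigr => x _.
rewrite mulr_suml; apply: eq_bigr => y _.
rewrite !P; ring.
Qed.

End Pure.

Section Bound.
Variables (R : rcfType) (n d : nat) (lam : 'I_(d ^ 2 - 1) -> 'M[R[i]]_d).
Hypothesis hlam : gellmann_basis lam.
Hypothesis hd : (0 < d)%N.
Local Notation C := (R[i]).

Lemma big_notsub (A : {set 'I_n}) (S : {set 'I_n}) :
  (#|S| * 2 <= n)%N -> (n%:R / 2 + 1 <= (#|A|%:R : R)) -> ~~ (A \subset S).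
Proof.
move=> hS hA; apply/negP => sub.
have h1 : (#|A| * 2 <= n)%N by apply: leq_trans hS; rewrite leq_mul2r subset_leq_card ?orbT.
have h2 : (#|A|%:R * 2 <= n%:R :> R).
  by rewrite -(natrM R #|A| 2) ler_nat.
lra.
Qed.

Lemma pure_bound (psi : Idx n d -> C) (S : {set 'I_n}) :
  (0 < #|S|)%N -> (#|S| * 2 <= n)%N ->
  (exists (f : Conf d S -> C) (g : Conf d (~: S) -> C),
      forall X, psi X = f (restr S X) * g (restr (~: S) X)) ->
  \sum_X `|psi X| ^+ 2 = 1 ->
  Cx lam (n%:R / 2 + 1) (rpure psi) <= d%:R ^+ n - d%:R.
Proof.
move=> hS0 hS [f [g hfg]] hn1.
have hh := @rpure_herm R n d psi.
apply: (@le_trans _ _ (\sum_(A : {set 'I_n} | ~~ (A \subset S)) tau2 lam A (rpure psi))).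
  rewrite /Cx [X in X <= _]big_mkcond [X in _ <= X]big_mkcond /=.
  apply: ler_sum => A _.
  case: ifP => [/andP [_ hA]|_]; first by rewrite (big_notsub hS hA).
  by case: ifP => _ //; apply: tau2_ge0.
have E := bigID (fun A : {set 'I_n} => A \subset S) predT (fun A => tau2 lam A (rpure psi)).
have -> : \sum_(A : {set 'I_n} | ~~ (A \subset S)) tau2 lam A (rpure psi) =
   \sum_(A : {set 'I_n}) tau2 lam A (rpure psi) - \sum_(A : {set 'I_n} | A \subset S) tau2 lam A (rpure psi).
  by rewrite E /= addrC addrK.
rewrite (eq_bigr _ (fun A _ => tauT hlam hd A (rpure psi))).
rewrite (eq_bigr _ (fun A _ => tauT hlam hd A (rpure psi))).
rewrite sumTA_all sumTA_subE purity_all (purity_sub hfg) hn1 expr1n !mulr1.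
apply: lerB => //.
rewrite -natrX ler_nat.
by rewrite -{1}(expn1 d) leq_pexp2l.
Qed.

End Bound.

Lemma inCC n (B : {set 'I_n}) k : k \in B -> k \in ~: ~: B.
Proof. by rewrite setCK. Qed.

Definition conv n d (B : {set 'I_n}) (c : Conf d (~: ~: B)) : Conf d B :=
  [ffun u => c (exist _ (val u) (inCC (valP u)))].

Lemma conv_restr n d (B : {set 'I_n}) (X : Idx n d) :
  conv (restr (~: ~: B) X) = restr B X.
Proof. by apply/ffunP => u; rewrite !ffunE. Qed.

Lemma pure_bound2 (R : rcfType) (n d : nat) (lam : 'I_(d ^ 2 - 1) -> 'M[R[i]]_d)
  (hlam : gellmann_basis lam) (hd : (0 < d)%N) (psi : Idx n d -> R[i]) :
  product_vec psi -> \sum_X `|psi X| ^+ 2 = 1 ->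
  Cx lam (n%:R / 2 + 1) (rpure psi) <= d%:R ^+ n - d%:R.
Proof.
move=> [B [hB hCB [f [g hfg]]]] hn1.
have hc := cardsC B; rewrite card_ord in hc.
move: hB hCB; rewrite -!card_gt0 => hB hCB.
case: (leqP #|B| #|~: B|) => hl.
  apply: (pure_bound hlam hd (S := B)) => //; first by lia.
  by exists f, g.
apply: (pure_bound hlam hd (S := ~: B)) => //; first by lia.
exists g, (fun c => f (conv c)) => X.
by rewrite conv_restr hfg mulrC.
Qed.

Unset Implicit Arguments.
Set Strict Implicit.

Theorem corollary1 (R : rcfType) (n d : nat) (hn : (2 <= n)%N) (hd : (2 <= d)%N)
  (lam : 'I_(d ^ 2 - 1) -> 'M[R[i]]_d) (hlam : gellmann_basis lam)
  (rho : op R n d) (hrho : biseparable rho) :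
  Cx lam (n%:R / 2 + 1) rho <= (d%:R ^+ n - d%:R : R[i]).
Proof.
have hd0 : (0 < d)%N by apply: leq_trans hd.
case: hrho => m [p [psi [hp hs hnorm hprod hr]]].
have hr' : forall X Y, rho X Y = \sum_j p j * rpure (psi j) X Y.
  by move=> X Y; rewrite hr; apply: eq_bigr => j _; rewrite /rpure mulrA.
apply: (@le_trans _ _ (\sum_j p j * Cx lam (n%:R / 2 + 1) (rpure (psi j)))).
  rewrite /Cx.
  apply: (@le_trans _ _ (\sum_(A : {set 'I_n} | (A != set0) && (n%:R / 2 + 1 <= (#|A|%:R : R)))
       \sum_j p j * tau2 lam A (rpure (psi j)))).
    apply: ler_sum => A _; apply: tau2_mix => //.
    by move=> j X Y; apply: rpure_herm.
  rewrite exchange_big /=; apply: ler_sum => j _.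
  by rewrite mulr_sumr.
apply: (@le_trans _ _ (\sum_j p j * (d%:R ^+ n - d%:R))).
  apply: ler_sum => j _; apply: ler_wpM2l => //.
  exact: pure_bound2.
by rewrite -mulr_suml hs mul1r.
Qed.
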